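(* Let $n\ge 2$ and consider the asynchronous $(n,k)$ game on the complete graph with agent set $[n]=\{1,\dots,n\}$ consisting of $n_r$ rejectors and $n-n_r$ random followers, where the threshold satisfies $k\le n-n_r$. Then the probability that a decision is made in finite time, i.e. $P\big(\exists\, t\ge 0:\ \sum_{i\in[n]}x_i(t)\ge k\big)$, is at most $\dfrac{n-n_r}{2k}$.
   Context: Each agent $i\in[n]$ holds an opinion $x_i(t)\in\{0,1\}$ at time $t=0,1,2,\dots$. The social graph is complete: every agent's social neighbors are all the other $n-1$ agents. In the $(n,k)$ game a decision is made at time $t$ if $\sum_{i\in[n]}x_i(t)\ge k$. The game is asynchronous: at each time step a single agent, chosen uniformly at random from $[n]$ (independently of the past), updates its opinion, and all other opinions stay the same. A rejector holds opinion $0$ at all times. A random follower has initial opinion distributed as Bernoulli$(1/2)$ (independently across agents), and when it updates it adopts the current opinion of one of its social neighbors chosen uniformly at random. *)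

(* Defs.v *)
From mathcomp Require Import all_boot all_order all_algebra.
Set Implicit Arguments. Unset Strict Implicit. Unset Printing Implicit Defensive.
Import Order.TTheory GRing.Theory Num.Theory.

(* Agents are 'I_n.  A configuration is x : {ffun 'I_n -> bool} (true = 1).
   R : {set 'I_n} is the set of rejectors; all other agents are random followers. *)

Definition init_conf (n : nat) (R : {set 'I_n}) (b : {ffun 'I_n -> bool})
  : {ffun 'I_n -> bool} :=
  [ffun i => if i \in R then false else b i].

(* One asynchronous step with random choice c = (i, j'): agent i updates;
   the social neighbour chosen is  lift i j'  (uniform over the n-1 agents
   different from i when j' is uniform in 'I_n.-1). *)
Definition step (n : nat) (R : {set 'I_n}) (x : {ffun 'I_n -> bool})
  (c : 'I_n * 'I_n.-1) : {ffun 'I_n -> bool} :=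
  [ffun j => if j == c.1 then (if c.1 \in R then false else x (lift c.1 c.2))
             else x j].

Definition conf_at (n : nat) (R : {set 'I_n}) (b : {ffun 'I_n -> bool})
  (s : seq ('I_n * 'I_n.-1)) (t : nat) : {ffun 'I_n -> bool} :=
  foldl (step R) (init_conf R b) (take t s).

Definition decided (n k : nat) (x : {ffun 'I_n -> bool}) : bool :=
  k <= \sum_(i < n) (x i : nat).

(* Probability that a decision is made at some time t in {0,...,T}:
   b is uniform on {ffun 'I_n -> bool} (so follower opinions are i.i.d.
   Bernoulli(1/2)), and the T step choices are i.i.d. uniform on
   'I_n * 'I_n.-1 (agent uniform in [n], neighbour uniform among the others). *)
Definition prob_decision_by (F : realFieldType) (n k : nat) (R : {set 'I_n})
  (T : nat) : F :=
  (\sum_(b : {ffun 'I_n -> bool}) \sum_(s : T.-tuple ('I_n * 'I_n.-1))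
      (if [exists t : 'I_T.+1, decided k (conf_at R b s t)] then 1 else 0))
  / ((2 ^ n * (n * n.-1) ^ T)%N)%:R.

(* Main.v *)
Require Import Defs.
From mathcomp Require Import all_boot all_order all_algebra.
From mathcomp Require Import zify ring lra.
Import Order.TTheory GRing.Theory Num.Theory.
Local Open Scope ring_scope.

Section Aux.
Variables (n k : nat) (R : {set 'I_n}).
Local Notation X := ('I_n * 'I_n.-1)%type.

Definition Sx (x : {ffun 'I_n -> bool}) : nat := (\sum_(i < n) (x i : nat))%N.

Lemma sum_lift (x : {ffun 'I_n -> bool}) i :
  (\sum_(j < n.-1) (x (lift i j) : nat) + x i = Sx x)%N.
Proof. by rewrite /Sx (bigD1_ord i) //= addnC. Qed.

Lemma step_S (x : {ffun 'I_n -> bool}) i j :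
  (Sx (step R x (i, j)) + x i = Sx x + (if i \in R then 0 else x (lift i j)))%N.
Proof.
rewrite /Sx (bigD1 i) //= [in RHS](bigD1 i) //= ffunE eqxx /=.
rewrite (eq_bigr (fun l => (x l : nat))); last first.
  by move=> l /negbTE Hl; rewrite ffunE Hl.
case: (i \in R) => /=; lia.
Qed.

Lemma supermart (x : {ffun 'I_n -> bool}) :
  (\sum_(c : X) Sx (step R x c) <= n * n.-1 * Sx x)%N.
Proof.
have E : (\sum_(c : X) Sx (step R x c) =
          \sum_(i < n) \sum_(j < n.-1) Sx (step R x (i, j)))%N.
  by rewrite [RHS]pair_big; apply: eq_bigr => -[i j].
rewrite E.
have Hi : forall i : 'I_n,
  (\sum_(j < n.-1) Sx (step R x (i, j)) + n.-1 * x i + x i <= n * Sx x)%N.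
  move=> i.
  have H0 : (\sum_(j < n.-1) Sx (step R x (i, j)) + n.-1 * x i =
             \sum_(j < n.-1) (Sx (step R x (i, j)) + x i))%N.
    by rewrite big_split /= sum_nat_const card_ord.
  have H1 : (\sum_(j < n.-1) (Sx (step R x (i, j)) + x i) <=
             \sum_(j < n.-1) (Sx x + x (lift i j)))%N.
    apply: leq_sum => j _; rewrite step_S leq_add2l; by case: (i \in R).
  have H1' : (\sum_(j < n.-1) (Sx x + x (lift i j)) =
      n.-1 * Sx x + \sum_(j < n.-1) (x (lift i j) : nat))%N.
    by rewrite big_split /= sum_nat_const card_ord.
  have H2 := sum_lift x i.
  have Hn : (0 < n)%N by have := ltn_ord i; lia.
  have -> : (n * Sx x = n.-1 * Sx x + Sx x)%N by rewrite -{1}(prednK Hn) mulSn addnC.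
  lia.
have H3 : (\sum_(i < n) (\sum_(j < n.-1) Sx (step R x (i, j)) + n.-1 * x i + x i)
   <= \sum_(i < n) n * Sx x)%N.
  by apply: leq_sum => i _; exact: Hi.
rewrite !big_split /= -!big_distrr /= sum_nat_const card_ord -/(Sx x) in H3.
have [Hn0|Hn] := posnP n.
  by rewrite big1 // => i _; have := ltn_ord i; lia.
have e : n = n.-1.+1 by rewrite prednK.
move: H3; set S := Sx x; set p := n.-1; set Q := (\sum_(i < n) _)%N.
move=> H3.
have : (n * p * S + n * S = n * n * S)%N by rewrite e; ring.
lia.
Qed.

Definition hit {T} (x : {ffun 'I_n -> bool}) (s : T.-tuple X) : bool :=
  [exists t : 'I_T.+1, decided k (foldl (step R) x (take t s))].

Lemma hit_cons T (x : {ffun 'I_n -> bool}) c (s : T.-tuple X) :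
  hit x [tuple of c :: s] = decided k x || hit (step R x c) s.
Proof.
apply/existsP/idP.
- case=> t0; destruct t0 as [[|t] lt] => /= Ht; first by rewrite Ht.
  apply/orP; right; apply/existsP.
  exists (Ordinal (lt : (t < T.+1)%N)); exact Ht.
- case/orP=> [Hd|/existsP [t Ht]]; first by exists ord0.
  have lt' : (t.+1 < T.+2)%N by rewrite ltnS ltn_ord.
  by exists (Ordinal lt').
Qed.

Lemma hit0 (x : {ffun 'I_n -> bool}) (s : 0.-tuple X) : hit x s = decided k x.
Proof.
apply/existsP/idP; last by move=> H; exists ord0; rewrite /= take0.
case=> t0; destruct t0 as [[|t] lt] => //=; by rewrite take0.
Qed.

Lemma sum_tupleS (V : nmodType) T (G : T.+1.-tuple X -> V) :
  \sum_(s : T.+1.-tuple X) G s = \sum_(c : X) \sum_(s : T.-tuple X) G [tuple of c :: s].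
Proof.
rewrite pair_big /=.
rewrite (reindex (fun p : X * T.-tuple X => [tuple of p.1 :: p.2])) /=.
  by apply: eq_bigr => -[c s].
exists (fun t => (thead t, [tuple of behead t])).
  by move=> [c s] _; congr pair; apply: val_inj.
by move=> t _; rewrite [in RHS](tuple_eta t).
Qed.

Variable F : realFieldType.

Definition h T (x : {ffun 'I_n -> bool}) : F :=
  \sum_(s : T.-tuple X) (if hit x s then 1 else 0).

Lemma h_ge0 T x : 0 <= h T x.
Proof. by apply: sumr_ge0 => s _; case: ifP. Qed.

Lemma h_le T x : h T x <= ((n * n.-1) ^ T)%:R.
Proof.
apply: (@le_trans _ _ (\sum_(s : T.-tuple X) (1 : F))).
  by apply: ler_sum => s _; case: ifP.
by rewrite sumr_const card_tuple card_prod !card_ord.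
Qed.

Lemma main_bound T x :
  k%:R * h T x <= ((n * n.-1) ^ T)%:R * (Sx x)%:R.
Proof.
elim: T x => [|T IH] x; case: (boolP (decided k x)) => Hd.
- rewrite mulrC; apply: ler_pM => //; first exact: h_ge0.
  exact: h_le. by rewrite ler_nat.
- rewrite /h big1 ?mulr0 ?mulr_ge0 // => s _.
  by rewrite hit0 (negbTE Hd).
- rewrite mulrC; apply: ler_pM => //; first exact: h_ge0.
  exact: h_le. by rewrite ler_nat.
- rewrite /h sum_tupleS.
  under eq_bigr => c _ do under eq_bigr => s _ do rewrite hit_cons (negbTE Hd) /=.
  rewrite -/(h T _) mulr_sumr.
  apply: (@le_trans _ _ (\sum_(c : X) ((n * n.-1) ^ T)%:R * (Sx (step R x c))%:R)).
    by apply: ler_sum => c _; exact: IH.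
  rewrite -mulr_sumr -natr_sum -natrM -natrM ler_nat expnS.
  rewrite (mulnC (n * n.-1)) -mulnA.
  exact: leq_mul (leqnn _) (supermart x).
Qed.

Lemma sum_init :
  ((\sum_(b : {ffun 'I_n -> bool}) Sx (init_conf R b)) * 2 = 2 ^ n * (n - #|R|))%N.
Proof.
pose cb := fun b : {ffun 'I_n -> bool} => [ffun i => ~~ b i].
have inj : injective cb.
  apply: (can_inj (g := cb)) => b; apply/ffunP => i; by rewrite !ffunE negbK.
have E : (\sum_(b : {ffun 'I_n -> bool}) Sx (init_conf R b) =
          \sum_(b : {ffun 'I_n -> bool}) Sx (init_conf R (cb b)))%N.
  exact: (reindex_inj inj).
have cR : (\sum_(i < n) (i \notin R : nat) = n - #|R|)%N.
  have e1 : (\sum_(i < n) (i \in R : nat) = #|R|)%N.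
    rewrite -sum1_card [RHS]big_mkcond /=; apply: eq_bigr => i _; by case: (i \in R).
  have e2 : (\sum_(i < n) (i \in R : nat) + \sum_(i < n) (i \notin R : nat) = n)%N.
    rewrite -big_split /= -[RHS]card_ord -sum1_card; apply: eq_bigr => i _.
    by case: (i \in R).
  lia.
have pt : forall b, (Sx (init_conf R b) + Sx (init_conf R (cb b)) = n - #|R|)%N.
  move=> b; rewrite /Sx -big_split /= -cR; apply: eq_bigr => i _.
  rewrite !ffunE; by case: (i \in R); case: (b i).
rewrite muln2 -addnn {2}E -big_split /=.
rewrite (eq_bigr _ (fun b _ => pt b)) sum_nat_const card_ffun card_bool card_ord.
by [].
Qed.

End Aux.
Arguments h {n} k R F T x.
Arguments Sx {n} x.
Arguments sum_init {n} R.

Theorem theorem1 (F : realFieldType) (n k : nat) (R : {set 'I_n}) :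
  (2 <= n)%N -> (1 <= k)%N -> (k <= n - #|R|)%N ->
  forall T : nat,
    prob_decision_by F k R T <= (n - #|R|)%:R / (2 * k)%:R.
Proof.
move=> H2 Hk HkR T.
rewrite /prob_decision_by.
have -> : (\sum_(b : {ffun 'I_n -> bool}) \sum_(s : T.-tuple ('I_n * 'I_n.-1))
      (if [exists t : 'I_T.+1, decided k (conf_at R b s t)] then 1 else 0) : F)
   = \sum_(b : {ffun 'I_n -> bool}) h k R F T (init_conf R b).
  by apply: eq_bigr.
set Sh := \sum_(b : {ffun 'I_n -> bool}) h k R F T (init_conf R b).
set SS := (\sum_(b : {ffun 'I_n -> bool}) Sx (init_conf R b))%N.
have K1 : k%:R * Sh <= ((n * n.-1) ^ T)%:R * SS%:R.
  rewrite /Sh /SS mulr_sumr natr_sum mulr_sumr; apply: ler_sum => b _.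
  exact: main_bound.
have K2 := sum_init R.
rewrite -/SS in K2.
have Np : (0 < n * n.-1)%N by rewrite muln_gt0; apply/andP; split; lia.
have D0 : 0 < ((2 ^ n * (n * n.-1) ^ T)%N)%:R :> F.
  by rewrite ltr0n muln_gt0 !expn_gt0 Np /=.
have k0 : 0 < (2 * k)%:R :> F by rewrite ltr0n; lia.
rewrite ler_pdivrMr // mulrAC ler_pdivlMr //.
apply: (@le_trans _ _ (2%:R * (((n * n.-1) ^ T)%:R * SS%:R))).
  by rewrite natrM mulrC -mulrA ler_pM2l // ltr0n.
rewrite -!natrM ler_nat.
set A := ((n * n.-1) ^ T)%N.
set m := (n - #|R|)%N.
rewrite -/m in K2.
have -> : (m * (2 ^ n * A) = A * (2 ^ n * m))%N by ring.
rewrite -K2.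
have -> : (2 * (A * SS) = A * (SS * 2))%N by ring.
by [].
Qed.
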